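(* MWL is subsumed by FO(ERDPQ): for every MWL formula there is an FO(ERDPQ) formula expressing the same query (position variables of sort $\pi$ being represented by path variables constrained to be prefixes of $\pi$). In particular WL is subsumed by FO(ERDPQ).
   Context: Data graphs. Fix a finite alphabet $\Sigma$ and infinite data domains $\mathcal D_{\mathrm{id}}$ and $\mathcal D_{\mathrm{prop}}$. A data graph is $G=(V,E,\mathrm{id},\mathrm{dataof})$ with $V$ a finite nonempty set of nodes, $E\subseteq V\times\Sigma\times V$, $\mathrm{id}:V\to\mathcal D_{\mathrm{id}}$ injective and $\mathrm{dataof}:V\to\mathcal D_{\mathrm{prop}}$. A path is a sequence $\rho=v_0a_1v_1\cdots a_nv_n$ ($n\ge 0$) with $(v_{i-1},a_i,v_i)\in E$ for all $i$; its length is $n$, its positions are $0,\dots,n$. Its data path is $d_0a_1d_1\cdots a_nd_n$ with $d_i=(\mathrm{id}(v_i),\mathrm{dataof}(v_i))$. RDPA. An $n$-ary register data path automaton (RDPA) has finitely many states partitioned into word states and data states, an initial data state, a set of final word states, and finitely many registers, each an id-register (values in $\mathcal D_{\mathrm{id}}\cup\{\sharp\}$) or a data-register (values in $\mathcal D_{\mathrm{prop}}\cup\{\sharp\}$), all initially $\sharp$. It reads words alternating between data letters and word letters, starting and ending with a data letter. From a word state it reads a letter of $(\Sigma\cup\{\sharp\})^n$ via a transition $p\xrightarrow{a}q$ to a data state, leaving registers unchanged. From a data state it reads a data letter (an $n$-tuple of ids and an $n$-tuple of property values, each possibly $\sharp$) via a transition whose guard is a conjunction of (well-typed) equalities/disequalities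 between registers, input components and constants, and whose update assigns to some registers an input component, a register value or a constant; it then moves to a word state. It accepts nondeterministically if some run ends in a final state. A tuple $(u_1,\dots,u_n)$ of data paths is accepted if their convolution (position-wise tuple, shorter ones padded with $\sharp$ to the length of the longest) is accepted. FO(ERDPQ). Formulas use node variables (ranging over $V$) and path variables (ranging over paths of $G$). Atoms: $\pi=\omega$; $x=y$; $(x,\pi,y)$ (''$\pi$ is a path from $x$ to $y$''); $(\pi_1,\dots,\pi_n)\in A$ for an $n$-ary RDPA $A$ (''the tuple of data paths of $\pi_1,\dots,\pi_n$ is accepted by $A$''). Formulas are closed under $\neg,\wedge,\exists x,\exists\pi$ with standard semantics. WL (walk logic). Path variables $\pi,\omega,\dots$ range over paths; each position variable $\ell^\pi$ has a sort $\pi$ and ranges over positions of the path assigned to $\pi$. Atoms: $E_a(\ell^\pi,m^\pi)$ ($m=\ell+1$ and the $m$-th label of the path is $a$); $\ell^\pi<m^\pi$ (same sort only); $\ell^\pi\equiv_{\mathrm{id}} n^\omega$ (the nodes at these positions are equal); $\ell^\pi\equiv_{\mathrm{data}} n^\omega$ (these nodes have equal $\mathrm{dataof}$). Closed under $\neg,\vee,\exists\ell^\pi,\exists\pi$. MWL (multi-path walk logic) is WL extended with atoms $\ell^\pi<n^\omega$ for arbitrary (possibly different) sorts $\pi,\omega$, true iff the position assigned to $\ell^\pi$ is smaller, as an integer, than the position assigned to $n^\omega$. *)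

(* Defs.v *)
From mathcomp Require Import all_boot.
From Stdlib Require List.
Set Implicit Arguments.
Unset Strict Implicit.
Unset Printing Implicit Defensive.

Record dgraph (Sigma : finType) (Did Dprop : Type) := DGraph {
  gV : finType;
  gV_nonempty : 0 < #|gV|;
  gE : gV -> Sigma -> gV -> bool;
  gid : gV -> Did;
  gid_inj : injective gid;
  gdata : gV -> Dprop
}.
Arguments gE {Sigma Did Dprop} _ _ _ _.
Arguments gid {Sigma Did Dprop} _ _.
Arguments gdata {Sigma Did Dprop} _ _.

(* A path v0 a1 v1 ... an vn, represented by its start node and the list of
   steps (a_i, v_i).  Validity is a separate predicate. *)
Record gpath (Sigma : finType) (Did Dprop : Type) (G : dgraph Sigma Did Dprop) :=
  GPath { pstart : gV G; psteps : seq (Sigma * gV G) }.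
Arguments GPath {Sigma Did Dprop G} _ _.
Arguments pstart {Sigma Did Dprop G} _.
Arguments psteps {Sigma Did Dprop G} _.

Fixpoint valid_steps (Sigma : finType) (Did Dprop : Type)
  (G : dgraph Sigma Did Dprop) (u : gV G) (s : seq (Sigma * gV G)) : bool :=
  match s with
  | [::] => true
  | (a, v) :: s' => gE G u a v && valid_steps v s'
  end.

Definition valid_path (Sigma : finType) (Did Dprop : Type)
  (G : dgraph Sigma Did Dprop) (p : gpath G) : bool :=
  valid_steps (pstart p) (psteps p).

Definition plen (Sigma : finType) (Did Dprop : Type)
  (G : dgraph Sigma Did Dprop) (p : gpath G) : nat := size (psteps p).

(* node v_i at position i (only meaningful for i <= plen p) *)
Definition pnode (Sigma : finType) (Did Dprop : Type)
  (G : dgraph Sigma Did Dprop) (p : gpath G) (i : nat) : gV G :=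
  nth (pstart p) (pstart p :: [seq s.2 | s <- psteps p]) i.

(* label a_i (i >= 1), as an option (None if out of range) *)
Definition plabel (Sigma : finType) (Did Dprop : Type)
  (G : dgraph Sigma Did Dprop) (p : gpath G) (i : nat) : option Sigma :=
  nth None [seq Some s.1 | s <- psteps p] i.-1.

Definition pend (Sigma : finType) (Did Dprop : Type)
  (G : dgraph Sigma Did Dprop) (p : gpath G) : gV G := pnode p (plen p).

Definition pprefix (Sigma : finType) (Did Dprop : Type)
  (G : dgraph Sigma Did Dprop) (p : gpath G) (l : nat) : gpath G :=
  GPath (pstart p) (take l (psteps p)).

(* None plays the role of the padding symbol #.                              *)

Inductive idterm (Did : Type) (n : nat) (RI : Type) :=
  | IReg of RI
  | IIn of 'I_n
  | IConst of option Did.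

Inductive dterm (Dprop : Type) (n : nat) (RD : Type) :=
  | DReg of RD
  | DIn of 'I_n
  | DConst of option Dprop.

Inductive gatom (Did Dprop : Type) (n : nat) (RI RD : Type) :=
  | GIdEq of idterm Did n RI & idterm Did n RI
  | GIdNeq of idterm Did n RI & idterm Did n RI
  | GDEq of dterm Dprop n RD & dterm Dprop n RD
  | GDNeq of dterm Dprop n RD & dterm Dprop n RD.

Definition dletter (Did Dprop : Type) (n : nat) : Type :=
  (n.-tuple (option Did) * n.-tuple (option Dprop))%type.

Definition wletter (Sigma : finType) (n : nat) : Type := n.-tuple (option Sigma).

Record rdpa (Sigma : finType) (Did Dprop : Type) (n : nat) := RDPA {
  rstate : finType;
  risdata : rstate -> bool;           (* data states; the others are word states *)
  rinit : rstate;
  rfinal : rstate -> bool;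
  rRI : finType;
  rRD : finType;
  rwtrans : seq (rstate * wletter Sigma n * rstate);
  (* (source, guard (conjunction of atoms), update of id-registers,
      update of data-registers (None = unchanged), target) *)
  rdtrans : seq (rstate * seq (gatom Did Dprop n rRI rRD)
                 * (rRI -> option (idterm Did n rRI))
                 * (rRD -> option (dterm Dprop n rRD)) * rstate);
  rinit_data : risdata rinit;
  rfinal_word : forall q, rfinal q -> ~~ risdata q;
  rwtrans_ok : forall t, List.In t rwtrans -> ~~ risdata t.1.1 /\ risdata t.2;
  rdtrans_ok : forall t, List.In t rdtrans ->
                 risdata t.1.1.1.1 /\ ~~ risdata t.2
}.

Definition regval (Sigma : finType) (Did Dprop : Type) (n : nat)
  (A : rdpa Sigma Did Dprop n) : Type :=
  ((rRI A -> option Did) * (rRD A -> option Dprop))%type.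

Definition regval0 (Sigma : finType) (Did Dprop : Type) (n : nat)
  (A : rdpa Sigma Did Dprop n) : regval A :=
  (fun _ => None, fun _ => None).

Definition eval_idterm (Sigma : finType) (Did Dprop : Type) (n : nat)
  (A : rdpa Sigma Did Dprop n) (nu : regval A) (d : dletter Did Dprop n)
  (t : idterm Did n (rRI A)) : option Did :=
  match t with
  | IReg r => nu.1 r
  | IIn i => tnth d.1 i
  | IConst c => c
  end.

Definition eval_dterm (Sigma : finType) (Did Dprop : Type) (n : nat)
  (A : rdpa Sigma Did Dprop n) (nu : regval A) (d : dletter Did Dprop n)
  (t : dterm Dprop n (rRD A)) : option Dprop :=
  match t with
  | DReg r => nu.2 r
  | DIn i => tnth d.2 i
  | DConst c => c
  end.

Definition gatom_holds (Sigma : finType) (Did Dprop : Type) (n : nat)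
  (A : rdpa Sigma Did Dprop n) (nu : regval A) (d : dletter Did Dprop n)
  (g : gatom Did Dprop n (rRI A) (rRD A)) : Prop :=
  match g with
  | GIdEq s t => eval_idterm nu d s = eval_idterm nu d t
  | GIdNeq s t => eval_idterm nu d s <> eval_idterm nu d t
  | GDEq s t => eval_dterm nu d s = eval_dterm nu d t
  | GDNeq s t => eval_dterm nu d s <> eval_dterm nu d t
  end.

Definition data_step (Sigma : finType) (Did Dprop : Type) (n : nat)
  (A : rdpa Sigma Did Dprop n) (q : rstate A) (nu : regval A)
  (d : dletter Did Dprop n) (q' : rstate A) (nu' : regval A) : Prop :=
  exists guard ui ud,
    List.In (q, guard, ui, ud, q') (rdtrans A) /\
    (forall g, List.In g guard -> gatom_holds nu d g) /\
    nu' = ((fun r => match ui r with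
                     | Some t => eval_idterm nu d t
                     | None => nu.1 r end),
           (fun r => match ud r with
                     | Some t => eval_dterm nu d t
                     | None => nu.2 r end)).

Fixpoint acc_word (Sigma : finType) (Did Dprop : Type) (n : nat)
  (A : rdpa Sigma Did Dprop n) (q : rstate A) (nu : regval A)
  (rest : seq (wletter Sigma n * dletter Did Dprop n)) : Prop :=
  match rest with
  | [::] => rfinal q
  | (a, d) :: rest' =>
      exists q1 q2 nu2,
        List.In (q, a, q1) (rwtrans A) /\ data_step q1 nu d q2 nu2 /\
        acc_word q2 nu2 rest'
  end.

(* acceptance of the word d0 a1 d1 ... aL dL *)
Definition rdpa_accepts (Sigma : finType) (Did Dprop : Type) (n : nat)
  (A : rdpa Sigma Did Dprop n) (d0 : dletter Did Dprop n)
  (rest : seq (wletter Sigma n * dletter Did Dprop n)) : Prop :=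
  exists q nu, data_step (rinit A) (regval0 A) d0 q nu /\ acc_word q nu rest.

Definition conv_len (Sigma : finType) (Did Dprop : Type) (n : nat)
  (G : dgraph Sigma Did Dprop) (ps : n.-tuple (gpath G)) : nat :=
  \max_(j < n) plen (tnth ps j).

Definition conv_dletter (Sigma : finType) (Did Dprop : Type) (n : nat)
  (G : dgraph Sigma Did Dprop) (ps : n.-tuple (gpath G)) (i : nat)
  : dletter Did Dprop n :=
  ([tuple (if i <= plen (tnth ps j) then Some (gid G (pnode (tnth ps j) i))
           else None) | j < n],
   [tuple (if i <= plen (tnth ps j) then Some (gdata G (pnode (tnth ps j) i))
           else None) | j < n]).

Definition conv_wletter (Sigma : finType) (Did Dprop : Type) (n : nat)
  (G : dgraph Sigma Did Dprop) (ps : n.-tuple (gpath G)) (i : nat)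
  : wletter Sigma n :=
  [tuple (if i <= plen (tnth ps j) then plabel (tnth ps j) i else None) | j < n].

Definition accepts_paths (Sigma : finType) (Did Dprop : Type) (n : nat)
  (G : dgraph Sigma Did Dprop) (A : rdpa Sigma Did Dprop n)
  (ps : n.-tuple (gpath G)) : Prop :=
  rdpa_accepts A (conv_dletter ps 0)
    [seq (conv_wletter ps i, conv_dletter ps i) | i <- iota 1 (conv_len ps)].

(* (inl pi  represents the MWL path variable pi,                             *)
(*  inr x   represents the MWL position variable x, see below)               *)

Definition fo_pvar : eqType := (nat + (nat * nat))%type.

Inductive fo (Sigma : finType) (Did Dprop : Type) :=
  | FPathEq of fo_pvar & fo_pvar
  | FNodeEq of nat & nat
  | FReach of nat & fo_pvar & nat
  | FAut (n : nat) of n.-tuple fo_pvar & rdpa Sigma Did Dprop n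
  | FNeg of fo Sigma Did Dprop
  | FAnd of fo Sigma Did Dprop & fo Sigma Did Dprop
  | FExNode of nat & fo Sigma Did Dprop
  | FExPath of fo_pvar & fo Sigma Did Dprop.

Fixpoint fo_sat (Sigma : finType) (Did Dprop : Type)
  (G : dgraph Sigma Did Dprop) (mun : nat -> gV G) (mup : fo_pvar -> gpath G)
  (f : fo Sigma Did Dprop) : Prop :=
  match f with
  | FPathEq p q => mup p = mup q
  | FNodeEq x y => mun x = mun y
  | FReach x p y => pstart (mup p) = mun x /\ pend (mup p) = mun y
  | FAut n ps A => accepts_paths A [tuple mup (tnth ps j) | j < n]
  | FNeg f1 => ~ fo_sat mun mup f1
  | FAnd f1 f2 => fo_sat mun mup f1 /\ fo_sat mun mup f2
  | FExNode x f1 =>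
      exists v : gV G, fo_sat (fun y => if y == x then v else mun y) mup f1
  | FExPath p f1 =>
      exists w : gpath G, valid_path w /\
        fo_sat mun (fun q => if q == p then w else mup q) f1
  end.

(* path variables: nat;  position variables: pairs (name, sort) : nat * nat, *)
(* the second component being the path variable that is the sort.           *)

Definition posvar : eqType := (nat * nat)%type.

Inductive mwl (Sigma : finType) :=
  | MEdge of nat & Sigma & nat & nat
      (* MEdge pi a l m  :  E_a(l^pi, m^pi) *)
  | MLt of posvar & posvar             (* l^pi < n^omega, arbitrary sorts *)
  | MEqId of posvar & posvar
  | MEqData of posvar & posvar
  | MNeg of mwl Sigma
  | MOr of mwl Sigma & mwl Sigma
  | MExPos of posvar & mwl Sigma
  | MExPath of nat & mwl Sigma.

Fixpoint mwl_sat (Sigma : finType) (Did Dprop : Type)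
  (G : dgraph Sigma Did Dprop) (nup : nat -> gpath G) (nul : posvar -> nat)
  (f : mwl Sigma) : Prop :=
  match f with
  | MEdge pi a l m =>
      nul (m, pi) = (nul (l, pi)).+1 /\ plabel (nup pi) (nul (m, pi)) = Some a
  | MLt x y => nul x < nul y
  | MEqId x y => pnode (nup x.2) (nul x) = pnode (nup y.2) (nul y)
  | MEqData x y =>
      gdata G (pnode (nup x.2) (nul x)) = gdata G (pnode (nup y.2) (nul y))
  | MNeg f1 => ~ mwl_sat nup nul f1
  | MOr f1 f2 => mwl_sat nup nul f1 \/ mwl_sat nup nul f2
  | MExPos x f1 =>
      exists i, i <= plen (nup x.2) /\
        mwl_sat nup (fun y => if y == x then i else nul y) f1
  | MExPath pi f1 =>
      exists w : gpath G, valid_path w /\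
        mwl_sat (fun q => if q == pi then w else nup q) nul f1
  end.

Fixpoint mwl_free_pos (Sigma : finType) (x : posvar) (f : mwl Sigma) : bool :=
  match f with
  | MEdge pi _ l m => (x == (l, pi)) || (x == (m, pi))
  | MLt y z | MEqId y z | MEqData y z => (x == y) || (x == z)
  | MNeg f1 => mwl_free_pos x f1
  | MOr f1 f2 => mwl_free_pos x f1 || mwl_free_pos x f2
  | MExPos y f1 => (x != y) && mwl_free_pos x f1
  | MExPath _ f1 => mwl_free_pos x f1
  end.

(* well-formedness: in  exists pi. psi, no position variable of sort pi is
   free in psi (position variables of sort pi live in the scope of pi). *)
Fixpoint mwl_wf (Sigma : finType) (f : mwl Sigma) : Prop :=
  match f with
  | MEdge _ _ _ _ | MLt _ _ | MEqId _ _ | MEqData _ _ => True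
  | MNeg f1 => mwl_wf f1
  | MOr f1 f2 => mwl_wf f1 /\ mwl_wf f2
  | MExPos _ f1 => mwl_wf f1
  | MExPath pi f1 => mwl_wf f1 /\ (forall x : posvar, x.2 = pi -> ~~ mwl_free_pos x f1)
  end.

Fixpoint is_wl (Sigma : finType) (f : mwl Sigma) : bool :=
  match f with
  | MLt x y => x.2 == y.2
  | MEdge _ _ _ _ | MEqId _ _ | MEqData _ _ => true
  | MNeg f1 | MExPos _ f1 | MExPath _ f1 => is_wl f1
  | MOr f1 f2 => is_wl f1 && is_wl f2
  end.

(* encoding of an MWL assignment into an FO(ERDPQ) path assignment:
   path variable pi  |->  nup pi ;
   position variable x = (l, pi) |-> prefix of nup pi of length nul x *)
Definition encode_assign (Sigma : finType) (Did Dprop : Type)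
  (G : dgraph Sigma Did Dprop) (nup : nat -> gpath G) (nul : posvar -> nat)
  : fo_pvar -> gpath G :=
  fun v => match v with
           | inl pi => nup pi
           | inr x => pprefix (nup x.2) (nul x)
           end.

(* Main.v *)
Require Import Defs.
From mathcomp Require Import all_boot.
From Stdlib Require List.
From Stdlib Require Import Classical FunctionalExtensionality.
From mathcomp Require Import zify.
Set Implicit Arguments.
Unset Strict Implicit.
Unset Printing Implicit Defensive.

Lemma In_map (A B : Type) (f : A -> B) (s : seq A) y :
  List.In y (map f s) <-> exists x, List.In x s /\ y = f x.
Proof.
elim: s => [|a s IH] /=; first by split => // [[x []]].
idtac.
split.
- case=> [<-|H]; first by exists a; auto.
  by case: (proj1 IH H) => x [H1 H2]; exists x; auto.
- case=> x [[<-|H] E]; first by left; rewrite E.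
  by right; apply: (proj2 IH); exists x.
Qed.

Lemma In_mem (T : eqType) (x : T) s : List.In x s <-> x \in s.
Proof.
elim: s => [|a s IH] //=; rewrite in_cons; split.
- by case=> [->|H]; rewrite ?eqxx ?(proj1 IH H) ?orbT.
- by case/orP=> [/eqP ->|H]; [left|right; apply: (proj2 IH)].
Qed.

Section Aut.
Variables (Sigma : finType) (Did Dprop : Type) (n : nat).

Definition q0 : 'I_4 := @Ordinal 4 0 isT.
Definition q1 : 'I_4 := @Ordinal 4 1 isT.
Definition q2 : 'I_4 := @Ordinal 4 2 isT.
Definition q3 : 'I_4 := @Ordinal 4 3 isT.

Definition isd4 (q : 'I_4) : bool := (val q == 0) || (val q == 2).
Definition fin4 (q : 'I_4) : bool := val q == 3.

Definition gl := seq (gatom Did Dprop n 'I_0 'I_0).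
Definition noI : 'I_0 -> option (idterm Did n 'I_0) := fun _ => None.
Definition noD : 'I_0 -> option (dterm Dprop n 'I_0) := fun _ => None.

Definition allw : seq (wletter Sigma n) := enum {: n.-tuple (option Sigma)}.

Definition wt4 (S : seq (wletter Sigma n)) : seq ('I_4 * wletter Sigma n * 'I_4) :=
  [seq (q1, w, q0) | w <- allw] ++ [seq (q1, w, q2) | w <- S].
Definition dt4 (gM gL : gl) :=
  [:: (q0, gM, noI, noD, q1); (q2, gL, noI, noD, q3)].

Lemma wt4_ok S t : List.In t (wt4 S) -> ~~ isd4 t.1.1 /\ isd4 t.2.
Proof.
rewrite /wt4 List.in_app_iff !In_map.
by case=> [[w [_ ->]]|[w [_ ->]]].
Qed.

Lemma dt4_ok gM gL t : List.In t (dt4 gM gL) -> isd4 t.1.1.1.1 /\ ~~ isd4 t.2.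
Proof. by case=> [<-|[<-|[]]]. Qed.

Lemma fin4_ok q : fin4 q -> ~~ isd4 q.
Proof. by rewrite /fin4 /isd4 => /eqP ->. Qed.

Definition aut4 (gM : gl) (S : seq (wletter Sigma n)) (gL : gl) : rdpa Sigma Did Dprop n :=
  @RDPA Sigma Did Dprop n 'I_4 isd4 q0 fin4 'I_0 'I_0
    (wt4 S) (dt4 gM gL) isT fin4_ok (@wt4_ok S) (@dt4_ok gM gL).

Definition Gs (A : rdpa Sigma Did Dprop n) (gs : seq (gatom Did Dprop n (rRI A) (rRD A)))
  (d : dletter Did Dprop n) :=
  forall g, List.In g gs -> gatom_holds (regval0 A) d g.

Lemma reg0 (A : rdpa Sigma Did Dprop n) (hI : rRI A -> False) (hD : rRD A -> False)
  (nu : regval A) : nu = regval0 A.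
Proof.
case: nu => a b; rewrite /regval0; congr pair; apply: functional_extensionality => r.
  by case: (hI r). by case: (hD r).
Qed.

Variables (gM gL : gl) (S : seq (wletter Sigma n)).
Let A := aut4 gM S gL.

Lemma noI0 : rRI A -> False. Proof. by case. Qed.
Lemma noD0 : rRD A -> False. Proof. by case. Qed.

Lemma ds4 q (nu : regval A) d q' (nu' : regval A) :
  data_step q nu d q' nu' <->
  ((q = q0 /\ q' = q1 /\ Gs (A:=A) gM d) \/ (q = q2 /\ q' = q3 /\ Gs (A:=A) gL d)).
Proof.
rewrite (reg0 noI0 noD0 nu) (reg0 noI0 noD0 nu'); split.
- case=> guard [ui [ud [H [Hg _]]]].
  case: H => [[-> -> _ _ ->]|[[-> -> _ _ ->]|[]]]; [left|right]; by split.
- case=> [[-> [-> H]]|[-> [-> H]]].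
  + exists gM, noI, noD; split; first by left.
    split=> //; exact: (reg0 noI0 noD0).
  + exists gL, noI, noD; split; first by right; left.
    split=> //; exact: (reg0 noI0 noD0).
Qed.

Lemma wt4P q w q' : List.In (q, w, q') (rwtrans A) <->
  (q = q1 /\ (q' = q0 \/ (q' = q2 /\ List.In w S))).
Proof.
rewrite /= /wt4 List.in_app_iff !In_map; split.
- case=> [[w' [_ [-> -> ->]]]|[w' [H [-> -> ->]]]]; split=> //; [left|right] => //.
- case=> -> [->|[-> H]]; [left|right]; exists w; split => //.
  by apply/In_mem; rewrite /allw mem_enum.
Qed.

Lemma q3_acc nu rest : acc_word (A:=A) q3 nu rest <-> rest = [::].
Proof.
case: rest => [|[w d] rest] //=; split=> // [[qa [qb [nu2 [H _]]]]].
by case/wt4P: H => /(congr1 val).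
Qed.

Lemma q1_acc nu rest : acc_word (A:=A) q1 nu rest <->
  exists pre w d, rest = rcons pre (w, d) /\ (forall p, List.In p pre -> Gs (A:=A) gM p.2)
   /\ List.In w S /\ Gs (A:=A) gL d.
Proof.
elim: rest nu => [|[w d] rest IH] nu /=.
  split=> // [[pre [w [d [H _]]]]]; by case: pre H.
split.
- case=> qa [qb [nu2 [Hw [Hd Hacc]]]].
  case/wt4P: Hw => _ [Ea|[Ea HS]]; subst qa.
  + case/ds4: Hd => [[_ [Eb HM]]|[/(congr1 val)//]]; subst qb.
    case/IH: Hacc => pre [w' [d' [E [Hp [HS HL]]]]].
    exists ((w, d) :: pre), w', d'; rewrite E; split => //; split => //.
    by move=> p [<-|]; auto.
  + case/ds4: Hd => [[/(congr1 val)//]|[_ [Eb HL]]]; subst qb.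
    move/q3_acc: Hacc => ->; by exists [::], w, d.
- case=> [[|p pre] [w' [d' [E [Hp [HS HL]]]]]].
  + case: E => -> -> ->; exists q2, q3, nu; split; first by apply/wt4P; auto.
    split; first by apply/ds4; auto. by apply/q3_acc.
  + case: E => Ep E; subst p; exists q0, q1, nu; split; first by apply/wt4P; auto.
    split; first by apply/ds4; left; split=> //; split=> //; apply: (Hp (w,d)); left.
    apply/IH; exists pre, w', d'; split=> //; split=> //.
    by move=> p Hp'; apply: Hp; right.
Qed.

Lemma acc4 d0 rest : rdpa_accepts A d0 rest <->
  Gs (A:=A) gM d0 /\ exists pre w d, rest = rcons pre (w, d) /\
    (forall p, List.In p pre -> Gs (A:=A) gM p.2) /\ List.In w S /\ Gs (A:=A) gL d.
Proof.
split.
- case=> q [nu [Hd Hacc]].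
  case/ds4: Hd => [[_ [E HM]]|[/(congr1 val)//]]; subst q.
  by split=> //; exact: (proj1 (q1_acc _ _) Hacc).
- case=> HM H; exists q1, (regval0 A); split; first by apply/ds4; auto.
  exact: (proj2 (q1_acc _ _) H).
Qed.

End Aut.

Section AutU.
Variables (Sigma : finType) (Did Dprop : Type) (n : nat).
Definition u0 : 'I_2 := @Ordinal 2 0 isT.
Definition u1 : 'I_2 := @Ordinal 2 1 isT.
Definition isd2 (q : 'I_2) : bool := val q == 0.
Definition fin2 (q : 'I_2) : bool := val q == 1.

Definition wtU (S : seq (wletter Sigma n)) : seq ('I_2 * wletter Sigma n * 'I_2) :=
  [seq (u1, w, u0) | w <- S].
Definition dtU (gA gB : gl Did Dprop n) :=
  [:: (u0, gA, noI Did n, noD Dprop n, u1); (u0, gB, noI Did n, noD Dprop n, u1)].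

Lemma wtU_ok S t : List.In t (wtU S) -> ~~ isd2 t.1.1 /\ isd2 t.2.
Proof. by rewrite /wtU In_map => [[w [_ ->]]]. Qed.
Lemma dtU_ok gA gB t : List.In t (dtU gA gB) -> isd2 t.1.1.1.1 /\ ~~ isd2 t.2.
Proof. by case=> [<-|[<-|[]]]. Qed.
Lemma fin2_ok q : fin2 q -> ~~ isd2 q.
Proof. by rewrite /fin2 /isd2 => /eqP ->. Qed.

Definition autU (gA gB : gl Did Dprop n) (S : seq (wletter Sigma n)) : rdpa Sigma Did Dprop n :=
  @RDPA Sigma Did Dprop n 'I_2 isd2 u0 fin2 'I_0 'I_0
    (wtU S) (dtU gA gB) isT fin2_ok (@wtU_ok S) (@dtU_ok gA gB).

Variables (gA gB : gl Did Dprop n) (S : seq (wletter Sigma n)).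
Let A := autU gA gB S.

Lemma noIU : rRI A -> False. Proof. by case. Qed.
Lemma noDU : rRD A -> False. Proof. by case. Qed.

Lemma dsU q (nu : regval A) d q' (nu' : regval A) :
  data_step q nu d q' nu' <->
  (q = u0 /\ q' = u1 /\ (Gs (A:=A) gA d \/ Gs (A:=A) gB d)).
Proof.
rewrite (reg0 noIU noDU nu) (reg0 noIU noDU nu'); split.
- case=> guard [ui [ud [H [Hg _]]]].
  case: H => [[-> -> _ _ ->]|[[-> -> _ _ ->]|[]]]; split=> //; split=> //; by [left|right].
- case=> [-> [-> [H|H]]].
  + exists gA, (noI Did n), (noD Dprop n); split; first by left.
    split=> //; exact: (reg0 noIU noDU).
  + exists gB, (noI Did n), (noD Dprop n); split; first by right; left.
    split=> //; exact: (reg0 noIU noDU).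
Qed.

Lemma u1_acc nu rest : acc_word (A:=A) u1 nu rest <->
  forall p, List.In p rest -> List.In p.1 S /\ (Gs (A:=A) gA p.2 \/ Gs (A:=A) gB p.2).
Proof.
elim: rest nu => [|[w d] rest IH] nu /=; first by split.
split.
- case=> qa [qb [nu2 [Hw [Hd Hacc]]]].
  move: Hw; rewrite /= /wtU In_map => [[w' [HS E]]].
  have [Ew Eq] : w = w' /\ qa = u0 by case: E.
  subst w' qa.
  case/dsU: Hd => [E' [Eb HG]]; subst qb.
  move=> p [<-|Hp]; first by split.
  exact: (proj1 (IH _) Hacc p Hp).
- move=> H; exists u0, u1, nu.
  have [HS HG] := H (w, d) (or_introl erefl).
  split; first by rewrite /= /wtU In_map; exists w.
  split; first by apply/dsU.
  by apply/IH => p Hp; apply: H; right.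
Qed.

Lemma accU d0 rest : rdpa_accepts A d0 rest <->
  (Gs (A:=A) gA d0 \/ Gs (A:=A) gB d0) /\
  forall p, List.In p rest -> List.In p.1 S /\ (Gs (A:=A) gA p.2 \/ Gs (A:=A) gB p.2).
Proof.
split.
- case=> q [nu [Hd Hacc]].
  case/dsU: Hd => [_ [E HM]]; subst q.
  by split=> //; exact: (proj1 (u1_acc _ _) Hacc).
- case=> HM H; exists u1, (regval0 A); split; first by apply/dsU.
  exact: (proj2 (u1_acc _ _) H).
Qed.
End AutU.

Section Conv.
Variables (Sigma : finType) (Did Dprop : Type) (G : dgraph Sigma Did Dprop).

Lemma iota_last L : iota 1 L.+1 = rcons (iota 1 L) L.+1.
Proof. by rewrite -cats1 -(addn1 L) iotaD add1n addn1. Qed.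

Lemma conv_acc4 n gM S gL (ps : n.-tuple (gpath G)) :
  let A := aut4 gM S gL in
  accepts_paths A ps <-> 0 < conv_len ps /\
    (forall i, i < conv_len ps -> Gs (A:=A) gM (conv_dletter ps i)) /\
    List.In (conv_wletter ps (conv_len ps)) S /\ Gs (A:=A) gL (conv_dletter ps (conv_len ps)).
Proof.
move=> A; rewrite /accepts_paths acc4.
case E: (conv_len ps) => [|L].
  split=> [[_ [pre [w [d [H _]]]]]|[]] //; by case: pre H.
rewrite iota_last map_rcons; split.
- case=> H0 [pre [w [d [H [Hp [HS HL]]]]]].
  case: (rcons_inj H) => Epre [Ew Ed]; subst.
  split=> //; split=> //.
  move=> [|i] Hi //; apply: (Hp (conv_wletter ps i.+1, conv_dletter ps i.+1)).
  apply/In_map; exists i.+1; split => //; apply/In_mem; rewrite mem_iota; lia.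
- case=> _ [Hi [HS HL]]; split; first exact: Hi.
  exists [seq (conv_wletter ps i, conv_dletter ps i) | i <- iota 1 L],
    (conv_wletter ps L.+1), (conv_dletter ps L.+1); split=> //; split=> //.
  move=> p /In_map [i [/In_mem Hi' ->]]; apply: Hi; move: Hi'; rewrite mem_iota; lia.
Qed.

Lemma conv_accU n gA gB S (ps : n.-tuple (gpath G)) :
  let A := autU gA gB S in
  accepts_paths A ps <->
    (forall i, i <= conv_len ps ->
       Gs (A:=A) gA (conv_dletter ps i) \/ Gs (A:=A) gB (conv_dletter ps i)) /\
    (forall i, 0 < i <= conv_len ps -> List.In (conv_wletter ps i) S).
Proof.
move=> A; rewrite /accepts_paths accU; split.
- case=> H0 H; split.
  + move=> [|i] Hi //; apply: (proj2 (H (conv_wletter ps i.+1, conv_dletter ps i.+1) _)).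
    apply/In_map; exists i.+1; split => //; apply/In_mem; rewrite mem_iota; lia.
  + move=> i Hi; apply: (proj1 (H (conv_wletter ps i, conv_dletter ps i) _)).
    apply/In_map; exists i; split => //; apply/In_mem; rewrite mem_iota; lia.
- case=> H1 H2; split; first exact: H1.
  move=> p /In_map [i [/In_mem Hi ->]]; move: Hi; rewrite mem_iota => Hi; split.
    apply: H2; lia. apply: H1; lia.
Qed.
End Conv.

Section Paths.
Variables (Sigma : finType) (Did Dprop : Type) (G : dgraph Sigma Did Dprop).
Implicit Types (p u v : gpath G).

Lemma plen_prefix p l : l <= plen p -> plen (pprefix p l) = l.
Proof. by rewrite /plen /= size_take => H; case: ltngtP H. Qed.

Lemma pnode_prefix p l i : i <= l -> pnode (pprefix p l) i = pnode p i.
Proof.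
move=> H; rewrite /pnode /=.
have -> : pstart p :: [seq s.2 | s <- take l (psteps p)] =
  take l.+1 (pstart p :: [seq s.2 | s <- psteps p]) by rewrite /= map_take.
by rewrite nth_take.
Qed.

Lemma plabel_prefix p l i : 0 < i <= l -> plabel (pprefix p l) i = plabel p i.
Proof.
move=> H; rewrite /plabel /= map_take nth_take //; lia.
Qed.

Lemma pend_prefix p l : l <= plen p -> pend (pprefix p l) = pnode p l.
Proof. by move=> H; rewrite /pend plen_prefix // pnode_prefix. Qed.

Lemma valid_prefix p l : valid_path p -> valid_path (pprefix p l).
Proof.
rewrite /valid_path /=; case: p => u s /=.
elim: s u l => [|[a w] s IH] u [|l] //= /andP [-> H] /=; exact: IH.
Qed.

Lemma plabel_nth p k x0 : k < plen p -> plabel p k.+1 = Some (nth x0 (psteps p) k).1.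
Proof. by move=> H; rewrite /plabel /= (nth_map x0). Qed.

Lemma pnode_nth p k x0 : k < plen p -> pnode p k.+1 = (nth x0 (psteps p) k).2.
Proof. by move=> H; rewrite /pnode /= (nth_map x0). Qed.

Lemma plabel_some p i : 0 < i <= plen p -> exists a, plabel p i = Some a.
Proof.
case: i => [|k] // /andP [_ H].
case E: (psteps p) (H) => [|x0 s]; first by rewrite /plen E.
by move=> H'; eexists; apply: (plabel_nth x0).
Qed.

Lemma pnode0 p : pnode p 0 = pstart p. Proof. by []. Qed.

Lemma prefix_eq u v : pstart u = pstart v -> plen u <= plen v ->
  (forall i, 0 < i <= plen u -> pnode u i = pnode v i /\ plabel u i = plabel v i) ->
  u = pprefix v (plen u).
Proof.
move=> Hs Hl H; case: u Hs Hl H => su stu /= Hs Hl H.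
rewrite /pprefix /= -Hs; congr GPath.
case Eu: stu (Hl) (H) => [|x0 s]; first by rewrite /plen take0.
rewrite -Eu => Hl' H'.
apply: (@eq_from_nth _ x0); first by rewrite size_take; move: Hl'; rewrite /plen /=; case: ltngtP => //; lia.
move=> k Hk; rewrite nth_take //.
have Hkv : k < plen v by move: Hl'; rewrite /plen /= in Hk *; lia.
have [Hn Hlab] := H' k.+1 ltac:(rewrite /plen /=; lia).
rewrite (pnode_nth (p := GPath su stu) x0) // (pnode_nth x0) // in Hn.
rewrite (plabel_nth (p := GPath su stu) x0) // (plabel_nth x0) // in Hlab.
case: Hlab => Hlab.
by rewrite [LHS]surjective_pairing [RHS]surjective_pairing Hlab Hn.
Qed.
End Paths.

Section Atoms.
Variables (Sigma : finType) (Did Dprop : Type) (G : dgraph Sigma Did Dprop).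
Definition o0 : 'I_2 := @Ordinal 2 0 isT.
Definition o1 : 'I_2 := @Ordinal 2 1 isT.

Notation ii j := (@IIn Did 2 'I_0 j).
Notation inone := (@IConst Did 2 'I_0 None).
Notation di j := (@DIn Dprop 2 'I_0 j).
Notation gIeq s t := (@GIdEq Did Dprop 2 'I_0 'I_0 s t).
Notation gIneq s t := (@GIdNeq Did Dprop 2 'I_0 'I_0 s t).
Notation gDeq s t := (@GDEq Did Dprop 2 'I_0 'I_0 s t).

Definition autLt : rdpa Sigma Did Dprop 2 :=
  aut4 [::] (allw Sigma 2) [:: gIeq (ii o0) inone].

Lemma conv2 (p0 p1 : gpath G) : conv_len [tuple p0; p1] = maxn (plen p0) (plen p1).
Proof. by rewrite /conv_len big_ord_recr big_ord_recr big_ord0 /= max0n. Qed.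

Lemma cd1 n (ps : n.-tuple (gpath G)) i j :
  tnth (conv_dletter ps i).1 j = if i <= plen (tnth ps j) then Some (gid G (pnode (tnth ps j) i)) else None.
Proof. by rewrite tnth_mktuple. Qed.
Lemma cd2 n (ps : n.-tuple (gpath G)) i j :
  tnth (conv_dletter ps i).2 j = if i <= plen (tnth ps j) then Some (gdata G (pnode (tnth ps j) i)) else None.
Proof. by rewrite tnth_mktuple. Qed.
Lemma cw1 n (ps : n.-tuple (gpath G)) i j :
  tnth (conv_wletter ps i) j = if i <= plen (tnth ps j) then plabel (tnth ps j) i else None.
Proof. by rewrite tnth_mktuple. Qed.

Lemma Gs1 n (A : rdpa Sigma Did Dprop n) g d : Gs (A:=A) [:: g] d <-> gatom_holds (regval0 A) d g.
Proof. split; first by apply; left. by move=> H g' [<-|[]]. Qed.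

Lemma tn0 T (a b : T) : tnth [tuple a; b] o0 = a. Proof. by []. Qed.
Lemma tn1 T (a b : T) : tnth [tuple a; b] o1 = b. Proof. by []. Qed.

Lemma ltP' (p0 p1 : gpath G) : accepts_paths autLt [tuple p0; p1] <-> plen p0 < plen p1.
Proof.
rewrite conv_acc4 Gs1 /= cd1 conv2 tn0.
split.
- case=> _ [_ [_ H]]; move: H; case: ifPn => // HH _; lia.
- move=> H; split; first lia. split; first by move=> i _ g [].
  split; first by apply/In_mem; rewrite /allw mem_enum.
  case: ifPn => //; lia.
Qed.

Definition autEdge (a : Sigma) : rdpa Sigma Did Dprop 2 :=
  aut4 [:: gIneq (ii o0) inone]
    (filter (fun w : wletter Sigma 2 => tnth w o1 == Some a) (allw Sigma 2))
    [:: gIeq (ii o0) inone].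

Lemma edgeP a (p0 p1 : gpath G) : accepts_paths (autEdge a) [tuple p0; p1] <->
  plen p1 = (plen p0).+1 /\ plabel p1 (plen p1) = Some a.
Proof.
rewrite conv_acc4 conv2.
split.
- case=> HL [HM [HS Hlast]]; move/Gs1: Hlast => /=; rewrite cd1 tn0.
  case: ifPn => // Hn _.
  have := HM (maxn (plen p0) (plen p1)).-1 ltac:(lia).
  move/Gs1 => /=; rewrite cd1 tn0; case: ifPn => // Hle _.
  move/In_mem: HS; rewrite mem_filter => /andP [/eqP Hw _]; move: Hw.
  rewrite cw1 tn1; case: ifPn => Hl1 Hw //.
  have E : plen p1 = (plen p0).+1 by lia.
  split => //; rewrite -Hw; congr plabel; lia.
- case=> E Hlab; have -> : maxn (plen p0) (plen p1) = plen p1 by lia.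
  split; first lia. split.
    move=> i Hi; apply/Gs1 => /=; rewrite cd1 tn0; case: ifPn => [_ //|]; lia.
  split.
    by apply/In_mem; rewrite mem_filter /allw mem_enum andbT cw1 tn1 leqnn Hlab eqxx.
  apply/Gs1 => /=; rewrite cd1 tn0; case: ifPn => //; lia.
Qed.

Definition autEqD : rdpa Sigma Did Dprop 2 :=
  autU [:: gDeq (di o0) (di o1)] [:: gDeq (di o0) (di o1)] [::].

Lemma eqdP (p0 p1 : gpath G) : accepts_paths autEqD [tuple p0; p1] <->
  plen p0 = 0 /\ plen p1 = 0 /\ gdata G (pstart p0) = gdata G (pstart p1).
Proof.
rewrite conv_accU conv2; split.
- case=> H1 H2.
  have HL : maxn (plen p0) (plen p1) = 0.
    case E: (maxn _ _) => [|L] //; by case: (H2 L.+1 ltac:(lia)).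
  have Hd : Gs (A:=autEqD) [:: gDeq (di o0) (di o1)] (conv_dletter [tuple p0; p1] 0).
    by case: (H1 0 (leq0n _)).
  move/Gs1: Hd => /=; rewrite !tnth_mktuple tn0 tn1 => -[] Hd.
  split; first lia. split; first lia. done.
- case=> E0 [E1 Ed]; rewrite E0 E1; split.
    move=> [|i] // _; left; apply/Gs1 => /=; rewrite !tnth_mktuple tn0 tn1 /= Ed //.
  move=> i; lia.
Qed.

Definition autPre : rdpa Sigma Did Dprop 2 :=
  autU [:: gIeq (ii o0) (ii o1)] [:: gIeq (ii o0) inone]
    (filter (fun w : wletter Sigma 2 => (tnth w o0 == tnth w o1) || (tnth w o0 == None))
      (allw Sigma 2)).

Lemma preP (u v : gpath G) : accepts_paths autPre [tuple u; v] <->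
  plen u <= plen v /\ u = pprefix v (plen u).
Proof.
rewrite conv_accU conv2; split.
- case=> H1 H2.
  have Hn : forall i, i <= plen u -> i <= plen v /\ pnode u i = pnode v i.
    move=> i Hi; have [] := H1 i ltac:(lia) => /Gs1 /=; rewrite !tnth_mktuple tn0 ?tn1 Hi.
      by case: ifPn => // Hv [] /(@gid_inj _ _ _ G) ->.
    by [].
  have Hl := (Hn _ (leqnn _)).1; split => //.
  apply: prefix_eq => //; first exact: (Hn 0 (leq0n _)).2.
  move=> i /andP [Hi0 Hi]; have [Hv Hnd] := Hn i Hi; split => //.
  have := H2 i ltac:(lia); move/In_mem; rewrite mem_filter => /andP [/orP [/eqP E|/eqP E] _];
    move: E; rewrite !tnth_mktuple tn0 ?tn1 Hi ?Hv //.
  have [a Ha] := @plabel_some _ _ _ _ u i ltac:(lia); by rewrite Ha.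
- case=> Hl; move: Hl; move: (plen u) => l Hl ->.
  have -> : maxn l (plen v) = plen v by lia.
  split.
  + move=> i Hi; case: (leqP i l) => Hil.
      left; apply/Gs1 => /=; rewrite !tnth_mktuple tn0 tn1 plen_prefix // Hil (leq_trans Hil Hl).
      by rewrite pnode_prefix.
    right; apply/Gs1 => /=; rewrite !tnth_mktuple tn0 plen_prefix // leqNgt Hil //.
  + move=> i Hi; apply/In_mem; rewrite mem_filter /allw mem_enum andbT !tnth_mktuple tn0 tn1.
    rewrite plen_prefix //; case: (leqP i l) => Hil.
      rewrite (leq_trans Hil Hl) plabel_prefix ?eqxx //; apply/andP; split; lia.
    by rewrite orbT.
Qed.
End Atoms.

Section Trans.
Variables (Sigma : finType) (Did Dprop : Type).

Definition pv (x : posvar) : fo_pvar := inr x.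
Definition pp (pi : nat) : fo_pvar := inl pi.

Fixpoint T (f : mwl Sigma) : fo Sigma Did Dprop :=
  match f with
  | MEdge pi a l m => FAut [tuple pv (l, pi); pv (m, pi)] (autEdge Did Dprop a)
  | MLt x y => FAut [tuple pv x; pv y] (autLt Sigma Did Dprop)
  | MEqId x y => FExNode 0 (FExNode 1 (FExNode 2
      (FAnd (@FReach Sigma Did Dprop 0 (pv x) 2) (@FReach Sigma Did Dprop 1 (pv y) 2))))
  | MEqData x y => FExNode 0 (FExNode 1 (FExNode 2 (FExNode 3
      (FAnd (FAnd (@FReach Sigma Did Dprop 0 (pv x) 1) (@FReach Sigma Did Dprop 2 (pv y) 3))
        (FExPath (pp 0) (FExPath (pp 1)
          (FAnd (FAnd (@FReach Sigma Did Dprop 1 (pp 0) 1) (@FReach Sigma Did Dprop 3 (pp 1) 3))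
             (FAut [tuple pp 0; pp 1] (autEqD Sigma Did Dprop)))))))))
  | MNeg f1 => FNeg (T f1)
  | MOr f1 f2 => FNeg (FAnd (FNeg (T f1)) (FNeg (T f2)))
  | MExPos x f1 => FExPath (pv x) (FAnd (FAut [tuple pv x; pp x.2] (autPre Sigma Did Dprop)) (T f1))
  | MExPath pi f1 => FExPath (pp pi) (T f1)
  end.

Lemma eq_ll a b : (pp a == pp b) = (a == b). Proof. by []. Qed.
Lemma eq_rr a b : (pv a == pv b) = (a == b). Proof. by []. Qed.
Lemma eq_rl a b : (pv a == pp b) = false. Proof. by []. Qed.
Lemma eq_lr a b : (pp a == pv b) = false. Proof. by []. Qed.

Lemma mk2 (G : dgraph Sigma Did Dprop) (f : fo_pvar -> gpath G) a b :
  [tuple f (tnth [tuple a; b] j) | j < 2] = [tuple f a; f b].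
Proof. by apply: eq_from_tnth => j; rewrite tnth_mktuple; case: j => [[|[|]]]. Qed.

Lemma mk2' T (F : 'I_2 -> T) : [tuple F j | j < 2] = [tuple F o0; F o1].
Proof.
apply: eq_from_tnth => j; rewrite tnth_mktuple; case: j => [[|[|//]] Hj] /=;
  congr F; exact: val_inj.
Qed.
End Trans.

Section Main.
Variables (Sigma : finType) (Did Dprop : Type).

Definition Inv (G : dgraph Sigma Did Dprop) (nup : nat -> gpath G) (nul : posvar -> nat)
  (mup : fo_pvar -> gpath G) (f : mwl Sigma) :=
  (forall pi, valid_path (nup pi)) /\ (forall pi, mup (pp pi) = nup pi) /\
  forall x, mwl_free_pos x f -> nul x <= plen (nup x.2) /\ mup (pv x) = pprefix (nup x.2) (nul x).

Lemma Inv_sub G nup nul mup (f f1 : mwl Sigma) :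
  (forall x, mwl_free_pos x f1 -> mwl_free_pos x f) -> Inv (G:=G) nup nul mup f -> Inv nup nul mup f1.
Proof. by move=> H [H1 [H2 H3]]; split=> //; split=> // x /H /H3. Qed.

Lemma Tcorrect (f : mwl Sigma) : mwl_wf f -> forall G nup nul mup (mun : nat -> gV G),
  Inv nup nul mup f -> (mwl_sat nup nul f <-> fo_sat mun mup (T Did Dprop f)).
Proof.
elim: f => [pi a l m|x y|x y|x y|f1 IH|f1 IH1 f2 IH2|x f1 IH|pi f1 IH] /= Hwf G nup nul mup mun HI.
- case: HI => _ [_ Hr].
  have [H1 E1] := Hr (l, pi) ltac:(by rewrite /= eqxx ?orbT).
  have [H2 E2] := Hr (m, pi) ltac:(by rewrite /= eqxx ?orbT).
  rewrite mk2 E1 E2 edgeP !plen_prefix //.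
  split=> -[E La]; split=> //; rewrite plabel_prefix // in La *; rewrite E; lia.
- case: HI => _ [_ Hr].
  have [H1 E1] := Hr x ltac:(by rewrite /= eqxx ?orbT).
  have [H2 E2] := Hr y ltac:(by rewrite /= eqxx ?orbT).
  by rewrite mk2 E1 E2 ltP' !plen_prefix.
- case: HI => _ [_ Hr].
  have [H1 E1] := Hr x ltac:(by rewrite /= eqxx ?orbT).
  have [H2 E2] := Hr y ltac:(by rewrite /= eqxx ?orbT).
  rewrite E1 E2 !pend_prefix //; split.
  + move=> E; do 3 eexists; split; split; [reflexivity|reflexivity|reflexivity|by rewrite E].
  + by case=> v0 [v1 [v2 [[_ ->] [_ ->]]]].
- case: HI => _ [_ Hr].
  have [H1 E1] := Hr x ltac:(by rewrite /= eqxx ?orbT).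
  have [H2 E2] := Hr y ltac:(by rewrite /= eqxx ?orbT).
  rewrite E1 E2; split.
  + move=> E; exists (pstart (pprefix (nup x.2) (nul x))), (pend (pprefix (nup x.2) (nul x))),
      (pstart (pprefix (nup y.2) (nul y))), (pend (pprefix (nup y.2) (nul y))).
    split; first by [].
    exists (GPath (pend (pprefix (nup x.2) (nul x))) [::]); split => //.
    exists (GPath (pend (pprefix (nup y.2) (nul y))) [::]); split => //.
    split; first by [].
    rewrite mk2' /= eqdP; split => //; split => //=.
    by rewrite !pend_prefix.
  + case=> v0 [v1 [v2 [v3 [[[_ Ex] [_ Ey]] [w1 [_ [w2 [_ [[[S1 _] [S2 _]] Acc]]]]]]]]].
    move: Acc; rewrite mk2' /= eqdP => -[_ [_ Ed]].
    by move: Ed; rewrite S1 S2 -Ex -Ey !pend_prefix.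
- by rewrite (IH Hwf G nup nul mup mun HI).
- case: Hwf => Hw1 Hw2.
  rewrite (IH1 Hw1 G nup nul mup mun (Inv_sub (f := MOr f1 f2) _ HI)); last by move=> z /= ->.
  rewrite (IH2 Hw2 G nup nul mup mun (Inv_sub (f := MOr f1 f2) _ HI)); last by move=> z /= ->; rewrite orbT.
  split; first tauto.
  by case: (classic (fo_sat mun mup (T Did Dprop f1))); tauto.
- case: HI => Hval [Hl Hr].
  have HI' : forall i w, i <= plen (nup x.2) -> w = pprefix (nup x.2) i ->
      Inv nup (fun y => if y == x then i else nul y)
        (fun q => if q == pv x then w else mup q) f1.
    move=> i w Hi Ew; split=> //; split.
      by move=> p; rewrite eq_lr.
    move=> y Hy; rewrite eq_rr; case: eqP => [->|Hne]; first by split.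
    apply: Hr => /=; rewrite Hy andbT; exact/eqP.
  split.
  + case=> i [Hi Hs]; exists (pprefix (nup x.2) i); split; first exact: valid_prefix.
    rewrite mk2' !tn0 !tn1 eq_rr eqxx ?eq_lr Hl preP plen_prefix //; split; first by split.
    exact: (proj1 (IH Hwf G _ _ _ mun (HI' i _ Hi erefl)) Hs).
  + case=> w [Hv []]; rewrite mk2' !tn0 !tn1 eq_rr eqxx ?eq_lr Hl preP => -[Hle Ew] Hs.
    exists (plen w); split => //.
    exact: (proj2 (IH Hwf G _ _ _ mun (HI' _ w Hle Ew)) Hs).
- case: Hwf => Hwf Hfree; case: HI => Hval [Hl Hr].
  have HI' : forall w, valid_path w ->
      Inv (fun q => if q == pi then w else nup q) nul
        (fun q => if q == pp pi then w else mup q) f1.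
    move=> w Hw; split; first by move=> q; case: eqP => // _; apply: Hval.
    split; first by move=> q; rewrite eq_ll Hl.
    move=> y Hy; rewrite eq_rl.
    have Hne : (y.2 == pi) = false by apply/negbTE/eqP => E; move: (Hfree y E); rewrite Hy.
    by rewrite Hne; apply: Hr.
  split.
  + case=> w [Hw Hs]; exists w; split => //.
    exact: (proj1 (IH Hwf G _ _ _ mun (HI' w Hw)) Hs).
  + case=> w [Hw Hs]; exists w; split => //.
    exact: (proj2 (IH Hwf G _ _ _ mun (HI' w Hw)) Hs).
Qed.
End Main.

Theorem mainTheorem16 (Sigma : finType) (Did Dprop : Type)
  (Did_infinite : forall s : list Did, exists d, ~ List.In d s)
  (Dprop_infinite : forall s : list Dprop, exists d, ~ List.In d s)
  (phi : mwl Sigma) (phi_wf : mwl_wf phi) :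
  exists psi : fo Sigma Did Dprop,
    forall (G : dgraph Sigma Did Dprop)
           (nup : nat -> gpath G) (nul : posvar -> nat),
      (forall pi, valid_path (nup pi)) ->
      (forall x : posvar, nul x <= plen (nup x.2)) ->
      forall mun : nat -> gV G,
        (mwl_sat nup nul phi <-> fo_sat mun (encode_assign nup nul) psi).
Proof.
exists (T Did Dprop phi) => G nup nul Hv Hl mun.
apply: Tcorrect => //; split=> //; split=> // x _; split=> //.
Qed.
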